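(* Let $g\geq 2$. For pairwise distinct $\alpha,\beta,\gamma\in\{a_1,\dots,a_g,b_1,\dots,b_g\}$, the family $V_{\alpha,\beta,\gamma}=((V_{\alpha,\beta,\gamma})_c)_c\in\mathfrak t_{(g)}(2)^{\times 2g}$ defined by \[ (V_{\alpha,\beta,\gamma})_c=\begin{cases} -\langle\alpha,\alpha^*\rangle\big([z_\beta^{(1)},z_\gamma^{(1)}]+2\langle\beta,\gamma\rangle t_{11}\big) & c=\alpha^*,\\ \langle\beta,\beta^*\rangle\big([z_\alpha^{(1)},z_\gamma^{(1)}]+2\langle\alpha,\gamma\rangle t_{11}\big) & c=\beta^*,\\ -\langle\gamma,\gamma^*\rangle\big([z_\alpha^{(1)},z_\beta^{(1)}]+2\langle\alpha,\beta\rangle t_{11}\big) & c=\gamma^*,\\ 0 & \text{otherwise} \end{cases} \] lies in $Z_{(g)}$.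
   Context: $\mathbb K$ is a field of characteristic zero. On $\{a_1,\dots,a_g,b_1,\dots,b_g\}$ the pairing is $\langle a_i,b_i\rangle=-\langle b_i,a_i\rangle=-1$ and zero on other pairs; the Poincaré dual is $a_i^*=b_i$, $b_i^*=a_i$. For $c\in\{a_i,b_i\}$, $z_c^{(1)}\in\mathfrak t_{(g)}(2)$ denotes $x_i^{(1)}$ if $c=a_i$ and $y_i^{(1)}$ if $c=b_i$. For $n\ge1$, $\mathfrak t_{(g)}(n)$ is the Lie algebra generated by $x_l^{(i)},y_l^{(i)},t_{ij}$ ($1\le i,j\le n$, $1\le l\le g$) with relations: all $t_{ii}$ central; $t_{ij}=t_{ji}$; $[t_{ij},t_{kl}]=0$ for $i,j,k,l$ distinct; $[t_{ik}+t_{kj},t_{ij}]=0$ for $i,j,k$ distinct; $[x_l^{(i)},x_k^{(j)}]=[y_l^{(i)},y_k^{(j)}]=0$ for $i\ne j$; $[x_k^{(i)},y_l^{(j)}]=0$ for $i\neq j,k\neq l$; $[x_k^{(i)},y_k^{(j)}]=t_{ij}$ for $i\neq j$; $\sum_{k=1}^g[x_k^{(i)},y_k^{(i)}]=-\sum_{j\neq i}t_{ij}-(2-2g)t_{ii}$. For $\phi:\{1,\dots,m\}\to\{1,\dots,n\}$, $\theta\mapsto\theta^\phi$ is the Lie morphism with $t_{ij}\mapsto\sum_{i'\in\phi^{-1}(i),j'\in\phi^{-1}(j)}t_{i'j'}$ ($i\ne j$), $t_{ii}\mapsto\sum_{i'\in\phi^{-1}(i)}t_{i'i'}+\frac12\sum_{i'\ne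 j'\in\phi^{-1}(i)}t_{i'j'}$, $x_l^{(i)}\mapsto\sum_{i'\in\phi^{-1}(i)}x_l^{(i')}$, $y_l^{(i)}\mapsto\sum_{i'\in\phi^{-1}(i)}y_l^{(i')}$, written $\theta^{I_1,\dots,I_n}$ with $I_k=\phi^{-1}(k)$. $Z_{(g)}$ is the set of families $(U_c)_{c}\in\mathfrak t_{(g)}(2)^{\times 2g}$, $c\in\{a_1,\dots,b_g\}$, such that: for every $c$ there is $u_c\in\mathfrak t_{(g)}(1)$ with $u_c^{12}=U_c^{1,2}+U_c^{2,1}$; $U_c^{12,3}-U_c^{1,23}-U_c^{2,13}=0$ for all $c$; $[U_{a_i}^{1,23},y_j^{(2)}]-[U_{b_j}^{2,13},x_i^{(1)}]=0$ for all $i,j$; for $i<j$, $[U_{a_i}^{1,23},x_j^{(2)}]-[U_{a_j}^{2,13},x_i^{(1)}]=0$ and $[U_{b_i}^{1,23},y_j^{(2)}]-[U_{b_j}^{2,13},y_i^{(1)}]=0$; $\sum_{i=1}^g[U_{a_i}^{1,23},y_i^{(1)}]-[U_{b_i}^{1,23},x_i^{(1)}]=0$. *)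

(* Defs.v *)
From mathcomp Require Import all_boot all_algebra.
Set Implicit Arguments. Unset Strict Implicit. Unset Printing Implicit Defensive.
Import GRing.Theory.
Local Open Scope ring_scope.

Inductive lterm (K : Type) (G : Type) : Type :=
| Lzero : lterm K G
| Lgen : G -> lterm K G
| Ladd : lterm K G -> lterm K G -> lterm K G
| Lscale : K -> lterm K G -> lterm K G
| Lbr : lterm K G -> lterm K G -> lterm K G.
Arguments Lzero {K G}. Arguments Lgen {K G}. Arguments Ladd {K G}.
Arguments Lscale {K G}. Arguments Lbr {K G}.

Definition Lsub (K : pzRingType) G (x y : lterm K G) := Ladd x (Lscale (-1) y).
Definition tsum (K : Type) G (s : seq (lterm K G)) := foldr (@Ladd K G) (@Lzero K G) s.

(* Congruence generated by the Lie algebra axioms and the relations [rel]: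
   lterm K G / lie_eq rel is the Lie algebra presented by generators G
   and relations rel. *)
Inductive lie_eq (K : fieldType) G (rel : lterm K G -> lterm K G -> Prop)
  : lterm K G -> lterm K G -> Prop :=
| le_rel x y : rel x y -> lie_eq rel x y
| le_refl x : lie_eq rel x x
| le_sym x y : lie_eq rel x y -> lie_eq rel y x
| le_trans x y z : lie_eq rel x y -> lie_eq rel y z -> lie_eq rel x z
| le_add x x' y y' : lie_eq rel x x' -> lie_eq rel y y' ->
    lie_eq rel (Ladd x y) (Ladd x' y')
| le_scale a x x' : lie_eq rel x x' -> lie_eq rel (Lscale a x) (Lscale a x')
| le_br x x' y y' : lie_eq rel x x' -> lie_eq rel y y' ->
    lie_eq rel (Lbr x y) (Lbr x' y')
| le_addA x y z : lie_eq rel (Ladd x (Ladd y z)) (Ladd (Ladd x y) z)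
| le_addC x y : lie_eq rel (Ladd x y) (Ladd y x)
| le_add0 x : lie_eq rel (Ladd x Lzero) x
| le_scale1 x : lie_eq rel (Lscale 1 x) x
| le_scale0 x : lie_eq rel (Lscale 0 x) Lzero
| le_scaleDl a b x : lie_eq rel (Lscale (a + b) x) (Ladd (Lscale a x) (Lscale b x))
| le_scaleDr a x y : lie_eq rel (Lscale a (Ladd x y)) (Ladd (Lscale a x) (Lscale a y))
| le_scaleA a b x : lie_eq rel (Lscale a (Lscale b x)) (Lscale (a * b) x)
| le_brDl x y z : lie_eq rel (Lbr (Ladd x y) z) (Ladd (Lbr x z) (Lbr y z))
| le_brDr x y z : lie_eq rel (Lbr x (Ladd y z)) (Ladd (Lbr x y) (Lbr x z))
| le_brZl a x y : lie_eq rel (Lbr (Lscale a x) y) (Lscale a (Lbr x y))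
| le_brZr a x y : lie_eq rel (Lbr x (Lscale a y)) (Lscale a (Lbr x y))
| le_brxx x : lie_eq rel (Lbr x x) Lzero
| le_jacobi x y z : lie_eq rel
    (Ladd (Ladd (Lbr x (Lbr y z)) (Lbr y (Lbr z x))) (Lbr z (Lbr x y))) Lzero.

Fixpoint lmap K G1 G2 (f : G1 -> lterm K G2) (t : lterm K G1) : lterm K G2 :=
  match t with
  | Lzero => Lzero
  | Lgen x => f x
  | Ladd x y => Ladd (lmap f x) (lmap f y)
  | Lscale a x => Lscale a (lmap f x)
  | Lbr x y => Lbr (lmap f x) (lmap f y)
  end.

(* ---------- The Lie algebra t_(g)(n) (indices are 0-based) ---------- *)
Inductive tgen (g n : nat) : Type :=
| GT : 'I_n -> 'I_n -> tgen g n
| GX : 'I_g -> 'I_n -> tgen g n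
| GY : 'I_g -> 'I_n -> tgen g n.
Arguments GT {g n}. Arguments GX {g n}. Arguments GY {g n}.

Section T.
Variables (K : fieldType) (g n : nat).
Notation tt := (lterm K (tgen g n)).
Definition tT i j : tt := Lgen (GT i j).
Definition tX l i : tt := Lgen (GX l i).
Definition tY l i : tt := Lgen (GY l i).

Inductive trel : tt -> tt -> Prop :=
| tr_central i (x : tgen g n) : trel (Lbr (tT i i) (Lgen x)) Lzero
| tr_sym i j : trel (tT i j) (tT j i)
| tr_4T i j k l : [&& i != j, i != k, i != l, j != k, j != l & k != l] ->
    trel (Lbr (tT i j) (tT k l)) Lzero
| tr_4T3 i j k : [&& i != j, i != k & j != k] ->
    trel (Lbr (Ladd (tT i k) (tT k j)) (tT i j)) Lzero
| tr_xx l k i j : i != j -> trel (Lbr (tX l i) (tX k j)) Lzero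
| tr_yy l k i j : i != j -> trel (Lbr (tY l i) (tY k j)) Lzero
| tr_xy k l i j : i != j -> k != l -> trel (Lbr (tX k i) (tY l j)) Lzero
| tr_xyT k i j : i != j -> trel (Lbr (tX k i) (tY k j)) (tT i j)
| tr_diag i : trel (tsum [seq Lbr (tX k i) (tY k i) | k <- enum 'I_g])
    (Ladd (Lscale (-1) (tsum [seq tT i j | j <- enum 'I_n & j != i]))
          (Lscale (- (2 - 2 * g%:R)) (tT i i))).

Definition teq (x y : tt) : Prop := lie_eq trel x y.
End T.

Definition coface_gen (K : fieldType) (g m n : nat) (phi : 'I_m -> 'I_n)
    (x : tgen g n) : lterm K (tgen g m) :=
  match x with
  | GT i j =>
      if i == j then
        Ladd (tsum [seq tT K g i' i' | i' <- enum 'I_m & phi i' == i])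
             (Lscale (2%:R^-1)
                (tsum (flatten [seq [seq tT K g i' j' | j' <- enum 'I_m &
                                       (phi j' == i) && (j' != i')]
                               | i' <- enum 'I_m & phi i' == i])))
      else tsum (flatten [seq [seq tT K g i' j' | j' <- enum 'I_m & phi j' == j]
                         | i' <- enum 'I_m & phi i' == i])
  | GX l i => tsum [seq tX K l i' | i' <- enum 'I_m & phi i' == i]
  | GY l i => tsum [seq tY K l i' | i' <- enum 'I_m & phi i' == i]
  end.

Definition coface (K : fieldType) (g m n : nat) (phi : 'I_m -> 'I_n) :
  lterm K (tgen g n) -> lterm K (tgen g m) := lmap (coface_gen K phi).

(* the specific maps used (0-based: paper's index k is k-1 here) *)
Definition i2_0 : 'I_2 := ord0.
Definition i2_1 : 'I_2 := ord_max.
Definition i3_0 : 'I_3 := ord0.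
Definition i3_1 : 'I_3 := inord 1.
Definition i3_2 : 'I_3 := ord_max.
Definition phi_12 (i : 'I_2) : 'I_1 := ord0.
Definition phi_1_2 (i : 'I_2) : 'I_2 := i.
Definition phi_2_1 (i : 'I_2) : 'I_2 := if i == i2_0 then i2_1 else i2_0.
Definition phi_12_3 (i : 'I_3) : 'I_2 := if i == i3_2 then i2_1 else i2_0.
Definition phi_1_23 (i : 'I_3) : 'I_2 := if i == i3_0 then i2_0 else i2_1.
Definition phi_2_13 (i : 'I_3) : 'I_2 := if i == i3_1 then i2_0 else i2_1.

(* ---------- symplectic basis {a_1..a_g,b_1..b_g}: (i,false)=a_i, (i,true)=b_i ---------- *)
Definition abasis (g : nat) := ('I_g * bool)%type.
Definition pairing (K : fieldType) g (c d : abasis g) : K :=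
  if c.1 == d.1 then
    (if ~~ c.2 && d.2 then -1 else if c.2 && ~~ d.2 then 1 else 0)
  else 0.
Definition pdual g (c : abasis g) : abasis g := (c.1, ~~ c.2).
Definition zc (K : fieldType) g (c : abasis g) : lterm K (tgen g 2) :=
  if c.2 then tY K c.1 i2_0 else tX K c.1 i2_0.
Definition a_ g (i : 'I_g) : abasis g := (i, false).
Definition b_ g (i : 'I_g) : abasis g := (i, true).

Definition inZ (K : fieldType) (g : nat) (U : abasis g -> lterm K (tgen g 2)) : Prop :=
  [/\ (forall c, exists u : lterm K (tgen g 1),
         teq (coface phi_12 u) (Ladd (coface phi_1_2 (U c)) (coface phi_2_1 (U c)))),
      (forall c, teq (Lsub (Lsub (coface phi_12_3 (U c)) (coface phi_1_23 (U c)))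
                           (coface phi_2_13 (U c))) Lzero),
      (forall i j : 'I_g,
         teq (Lsub (Lbr (coface phi_1_23 (U (a_ i))) (tY K j i3_1))
                   (Lbr (coface phi_2_13 (U (b_ j))) (tX K i i3_0))) Lzero),
      (forall i j : 'I_g, (i < j)%N ->
         teq (Lsub (Lbr (coface phi_1_23 (U (a_ i))) (tX K j i3_1))
                   (Lbr (coface phi_2_13 (U (a_ j))) (tX K i i3_0))) Lzero
         /\ teq (Lsub (Lbr (coface phi_1_23 (U (b_ i))) (tY K j i3_1))
                      (Lbr (coface phi_2_13 (U (b_ j))) (tY K i i3_0))) Lzero) &
      teq (tsum [seq Lsub (Lbr (coface phi_1_23 (U (a_ i))) (tY K i i3_0))
                          (Lbr (coface phi_1_23 (U (b_ i))) (tX K i i3_0))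
                | i <- enum 'I_g]) Lzero].

Definition t11 (K : fieldType) g : lterm K (tgen g 2) := tT K g i2_0 i2_0.
Definition Vabc (K : fieldType) g (al be ga : abasis g) (c : abasis g)
  : lterm K (tgen g 2) :=
  if c == pdual al then
    Lscale (- pairing K al (pdual al))
      (Ladd (Lbr (zc K be) (zc K ga)) (Lscale (2 * pairing K be ga) (t11 K g)))
  else if c == pdual be then
    Lscale (pairing K be (pdual be))
      (Ladd (Lbr (zc K al) (zc K ga)) (Lscale (2 * pairing K al ga) (t11 K g)))
  else if c == pdual ga then
    Lscale (- pairing K ga (pdual ga))
      (Ladd (Lbr (zc K al) (zc K be)) (Lscale (2 * pairing K al be) (t11 K g)))
  else Lzero.

(* Main.v *)
Require Import Defs.
From mathcomp Require Import all_boot all_algebra.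
From mathcomp Require Import ring.
From Stdlib Require Import Setoid Morphisms.
Set Implicit Arguments. Unset Strict Implicit. Unset Printing Implicit Defensive.
Import GRing.Theory.
Local Open Scope ring_scope.

Section S1.
Variables (K : fieldType) (g n : nat).
Notation T := (lterm K (tgen g n)).
Lemma teq_refl (x : T) : teq x x. Proof. exact: le_refl. Qed.
Lemma teq_sym (x y : T) : teq x y -> teq y x. Proof. exact: le_sym. Qed.
Lemma teq_trans (x y z : T) : teq x y -> teq y z -> teq x z. Proof. exact: le_trans. Qed.
End S1.
#[global] Hint Resolve teq_refl : core.

Add Parametric Relation (K : fieldType) (g n : nat) : (lterm K (tgen g n)) (@teq K g n)
  reflexivity proved by (@teq_refl K g n)
  symmetry proved by (@teq_sym K g n)
  transitivity proved by (@teq_trans K g n) as teq_rel.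

Add Parametric Morphism (K : fieldType) (g n : nat) : (@Ladd K (tgen g n))
  with signature (@teq K g n) ==> (@teq K g n) ==> (@teq K g n) as Ladd_mor.
Proof. move=> x x' h y y' h'; exact: le_add. Qed.
Add Parametric Morphism (K : fieldType) (g n : nat) (a : K) : (@Lscale K (tgen g n) a)
  with signature (@teq K g n) ==> (@teq K g n) as Lscale_mor.
Proof. move=> x x' h; exact: le_scale. Qed.
Add Parametric Morphism (K : fieldType) (g n : nat) : (@Lbr K (tgen g n))
  with signature (@teq K g n) ==> (@teq K g n) ==> (@teq K g n) as Lbr_mor.
Proof. move=> x x' h y y' h'; exact: le_br. Qed.
Add Parametric Morphism (K : fieldType) (g n : nat) : (@Lsub K (tgen g n))
  with signature (@teq K g n) ==> (@teq K g n) ==> (@teq K g n) as Lsub_mor.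
Proof. move=> x x' h y y' h'; rewrite /Lsub h h'; reflexivity. Qed.

Section Lin.
Variables (K : fieldType) (g n : nat).
Notation T := (lterm K (tgen g n)).
Notation teq := (@teq K g n).
Implicit Types x y z : T.

Lemma addA x y z : teq (Ladd x (Ladd y z)) (Ladd (Ladd x y) z). Proof. exact: le_addA. Qed.
Lemma addC x y : teq (Ladd x y) (Ladd y x). Proof. exact: le_addC. Qed.
Lemma add0 x : teq (Ladd x Lzero) x. Proof. exact: le_add0. Qed.
Lemma add0l x : teq (Ladd Lzero x) x. Proof. rewrite addC. rewrite add0. reflexivity. Qed.
Lemma scale0 x : teq (Lscale 0 x) Lzero. Proof. exact: le_scale0. Qed.
Lemma scale1 x : teq (Lscale 1 x) x. Proof. exact: le_scale1. Qed.
Lemma scaleA a b x : teq (Lscale a (Lscale b x)) (Lscale (a * b) x). Proof. exact: le_scaleA. Qed.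
Lemma scaleDl a b x : teq (Lscale (a + b) x) (Ladd (Lscale a x) (Lscale b x)). Proof. exact: le_scaleDl. Qed.
Lemma scaleDr a x y : teq (Lscale a (Ladd x y)) (Ladd (Lscale a x) (Lscale a y)). Proof. exact: le_scaleDr. Qed.
Lemma scalez a : teq (Lscale a (Lzero : T)) Lzero.
Proof. transitivity (Lscale a (Lscale 0 (Lzero : T))); first by rewrite scale0.
by rewrite scaleA mulr0 scale0. Qed.

Inductive lexpr := LEz | LEa of nat | LEadd of lexpr & lexpr | LEsc of K & lexpr.
Fixpoint denote (env : seq T) e : T :=
  match e with LEz => Lzero | LEa i => nth Lzero env i
  | LEadd a b => Ladd (denote env a) (denote env b)
  | LEsc k a => Lscale k (denote env a) end.
Fixpoint coef e (i : nat) : K :=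
  match e with LEz => 0 | LEa j => if Nat.eqb i j then 1 else 0
  | LEadd a b => coef a i + coef b i | LEsc k a => k * coef a i end.
Fixpoint wf N e : bool :=
  match e with LEz => true | LEa j => (j < N)%N | LEadd a b => wf N a && wf N b
  | LEsc _ a => wf N a end.
Definition comb (env : seq T) (c : nat -> K) (s : seq nat) :=
  tsum [seq Lscale (c i) (nth Lzero env i) | i <- s].

Lemma comb_add env c d s : teq (comb env (fun i => c i + d i) s)
   (Ladd (comb env c s) (comb env d s)).
Proof.
elim: s => [|i s IH] /=; first by rewrite add0.
rewrite /comb /= -/(comb env _ s) IH scaleDl.
set A := Lscale (c i) _; set B := Lscale (d i) _; set C := comb env c s; set D := comb env d s.
rewrite !addA; apply: Ladd_mor => //.
by rewrite -!addA (addC C B).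
Qed.
Lemma comb_scale env k c s : teq (comb env (fun i => k * c i) s)
   (Lscale k (comb env c s)).
Proof.
elim: s => [|i s IH] /=; first by rewrite scalez.
by rewrite /comb /= -/(comb env _ s) IH scaleDr scaleA.
Qed.
Lemma comb0 env c s : (forall i, i \in s -> c i = 0) -> teq (comb env c s) Lzero.
Proof.
elim: s => [|i s IH] h /=; first reflexivity.
rewrite /comb /= -/(comb env _ s) IH; last by move=> j hj; apply: h; rewrite inE hj orbT.
by rewrite h ?inE ?eqxx // scale0 add0.
Qed.
Lemma comb_cat env c s1 s2 : teq (comb env c (s1 ++ s2)) (Ladd (comb env c s1) (comb env c s2)).
Proof.
elim: s1 => [|i s IH] /=; first by rewrite /comb /= add0l.
by rewrite /comb /= -!/(comb env _ _) IH addA.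
Qed.
Lemma comb_ext env c d s : (forall i, i \in s -> c i = d i) -> comb env c s = comb env d s.
Proof. by move=> h; rewrite /comb; congr tsum; apply/eq_in_map => i /h ->. Qed.

Lemma comb_atom env j N : (j < N)%N ->
  teq (comb env (fun i => if Nat.eqb i j then 1 else 0) (iota 0 N)) (nth Lzero env j).
Proof.
move=> hj.
have -> : iota 0 N = iota 0 j ++ j :: iota j.+1 (N - j.+1).
  rewrite -[in LHS](subnKC hj) iotaD add0n -addn1 iotaD /= add0n -catA /=.
  by rewrite addn1.
rewrite comb_cat /comb /= -!/(comb env _ _).
rewrite comb0; last by move=> i; rewrite mem_iota => /andP [_ h];
  case: (PeanoNat.Nat.eqb_spec i j) => // e; rewrite e ltnn in h.
rewrite comb0; last by move=> i; rewrite mem_iota => /andP [h _];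
  case: (PeanoNat.Nat.eqb_spec i j) => // e; rewrite e ltnn in h.
by rewrite PeanoNat.Nat.eqb_refl scale1 add0l add0.
Qed.

Lemma denote_comb env e : wf (size env) e ->
  teq (denote env e) (comb env (coef e) (iota 0 (size env))).
Proof.
elim: e => [|j|a IHa b IHb|k a IHa] /=.
- by move=> _; rewrite comb0.
- by move=> hj; rewrite comb_atom.
- by case/andP=> ha hb; rewrite comb_add IHa // IHb.
- by move=> ha; rewrite comb_scale IHa.
Qed.

Fixpoint allP (N : nat) (P : nat -> Prop) : Prop :=
  match N with 0 => True | S m => allP m P /\ P m end.
Lemma allPP N P : allP N P -> forall i, (i < N)%N -> P i.
Proof.
elim: N => [|N IH] //= [h1 h2] i; rewrite ltnS leq_eqVlt => /orP [/eqP -> //|].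
exact: IH.
Qed.

Lemma lin_ok env e1 e2 : wf (size env) e1 -> wf (size env) e2 ->
  allP (size env) (fun i => coef e1 i = coef e2 i) ->
  teq (denote env e1) (denote env e2).
Proof.
move=> h1 h2 hc; rewrite denote_comb // [X in teq _ X]denote_comb //.
have -> // : comb env (coef e1) (iota 0 (size env)) = comb env (coef e2) (iota 0 (size env)).
apply: comb_ext => i; rewrite mem_iota add0n => /andP [_ hi]; exact: (allPP hc).
Qed.
End Lin.

Ltac lmem x env := match env with
  | nil => constr:(false) | cons x _ => constr:(true)
  | cons _ ?r => lmem x r end.
Ltac lidx x env := match env with
  | cons x _ => constr:(0%nat) | cons _ ?r => let k := lidx x r in constr:(S k) end.
Ltac lsnoc env t := match env with
  | nil => constr:(cons t nil)
  | cons ?h ?r => let r' := lsnoc r t in constr:(cons h r') end.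
Ltac latoms t env := match t with
  | Lzero => env
  | Lsub ?a ?b => let e1 := latoms a env in latoms b e1
  | Ladd ?a ?b => let e1 := latoms a env in latoms b e1
  | Lscale _ ?a => latoms a env
  | _ => let b := lmem t env in match b with
         | true => env | false => lsnoc env t end end.
Ltac lreify K t env := match t with
  | Lzero => constr:(LEz K)
  | Lsub ?a ?b => let r1 := lreify K a env in let r2 := lreify K b env in
       constr:(LEadd r1 (LEsc (-1) r2))
  | Ladd ?a ?b => let r1 := lreify K a env in let r2 := lreify K b env in constr:(LEadd r1 r2)
  | Lscale ?k ?a => let r := lreify K a env in constr:(LEsc k r)
  | _ => let k := lidx t env in constr:(LEa K k) end.
Ltac lin := match goal with |- @teq ?K ?g ?n ?x ?y =>
  let e0 := latoms x (@nil (lterm K (tgen g n))) in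
  let env := latoms y e0 in
  let r1 := lreify K x env in let r2 := lreify K y env in
  change (@teq K g n (denote env r1) (denote env r2));
  apply: lin_ok; [reflexivity | reflexivity |
    cbv beta iota zeta delta [coef allP Nat.eqb size]; repeat split; try ring] end.




Definition zn (K : fieldType) g m (c : abasis g) (i : 'I_m) : lterm K (tgen g m) :=
  if c.2 then tY K c.1 i else tX K c.1 i.

Section Basic.
Variables (K : fieldType) (g n : nat).
Notation T := (lterm K (tgen g n)).
Notation teq := (@teq K g n).
Implicit Types x y z : T.

Lemma brDl x y z : teq (Lbr (Ladd x y) z) (Ladd (Lbr x z) (Lbr y z)). Proof. exact: le_brDl. Qed.
Lemma brDr x y z : teq (Lbr x (Ladd y z)) (Ladd (Lbr x y) (Lbr x z)). Proof. exact: le_brDr. Qed.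
Lemma brZl a x y : teq (Lbr (Lscale a x) y) (Lscale a (Lbr x y)). Proof. exact: le_brZl. Qed.
Lemma brZr a x y : teq (Lbr x (Lscale a y)) (Lscale a (Lbr x y)). Proof. exact: le_brZr. Qed.
Lemma brxx x : teq (Lbr x x) Lzero. Proof. exact: le_brxx. Qed.
Lemma br0r x : teq (Lbr x Lzero) Lzero.
Proof. transitivity (Lbr x (Lscale 0 Lzero)); first by rewrite scale0.
by rewrite brZr scale0. Qed.
Lemma br0l x : teq (Lbr Lzero x) Lzero.
Proof. transitivity (Lbr (Lscale 0 Lzero) x); first by rewrite scale0.
by rewrite brZl scale0. Qed.
Lemma Lsub_sub x y : Lsub x y = Ladd x (Lscale (-1) y). Proof. by []. Qed.

Lemma anti x y : teq (Lbr x y) (Lscale (-1) (Lbr y x)).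
Proof.
have h : teq (Lbr (Ladd x y) (Ladd x y)) Lzero by exact: brxx.
rewrite brDl !brDr !brxx in h.
transitivity (Ladd (Ladd (Ladd Lzero (Lbr x y)) (Ladd (Lbr y x) Lzero)) (Lscale (-1) (Lbr y x))); first lin.
rewrite h; lin.
Qed.

Lemma der x y z : teq (Lbr x (Lbr y z)) (Ladd (Lbr (Lbr x y) z) (Lbr y (Lbr x z))).
Proof.
have h : teq (Ladd (Ladd (Lbr x (Lbr y z)) (Lbr y (Lbr z x))) (Lbr z (Lbr x y))) Lzero
  by exact: le_jacobi.
rewrite (anti (Lbr x y) z) (anti x z) brZr.
transitivity (Ladd (Ladd (Ladd (Lbr x (Lbr y z)) (Lbr y (Lbr z x))) (Lbr z (Lbr x y)))
   (Lscale (-1) (Ladd (Lbr y (Lbr z x)) (Lbr z (Lbr x y))))); first lin.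
rewrite h; lin.
Qed.

Lemma jac3 x y z : teq (Ladd (Ladd (Lbr (Lbr y z) x) (Lbr (Lbr z x) y)) (Lbr (Lbr x y) z)) Lzero.
Proof.
have h : teq (Ladd (Ladd (Lbr x (Lbr y z)) (Lbr y (Lbr z x))) (Lbr z (Lbr x y))) Lzero
  by exact: le_jacobi.
rewrite (anti (Lbr y z)) (anti (Lbr z x)) (anti (Lbr x y)).
transitivity (Lscale (-1) (Ladd (Ladd (Lbr x (Lbr y z)) (Lbr y (Lbr z x))) (Lbr z (Lbr x y)))); first lin.
by rewrite h scalez.
Qed.

Lemma tsum_ext (I : Type) (F G : I -> T) s : (forall i, teq (F i) (G i)) ->
  teq (tsum (map F s)) (tsum (map G s)).
Proof. move=> h; elim: s => [|i s IH] //=; by rewrite IH h. Qed.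
Lemma tsum_add (I : Type) (F G : I -> T) s :
  teq (tsum [seq Ladd (F i) (G i) | i <- s]) (Ladd (tsum (map F s)) (tsum (map G s))).
Proof. elim: s => [|i s IH] /=; first by rewrite add0. rewrite IH; lin. Qed.
Lemma tsum0 (I : eqType) (F : I -> T) s : (forall i, i \in s -> teq (F i) Lzero) ->
  teq (tsum (map F s)) Lzero.
Proof.
elim: s => [|i s IH] h //=. rewrite IH; last by move=> j hj; apply: h; rewrite inE hj orbT.
by rewrite h ?inE ?eqxx // add0.
Qed.
Lemma tsum_single (I : eqType) (F : I -> T) s k : uniq s -> k \in s ->
  (forall i, i != k -> teq (F i) Lzero) -> teq (tsum (map F s)) (F k).
Proof.
elim: s => [|i s IH] //= /andP [his us]; rewrite inE => hk h.
case: (eqVneq i k) => [e|ne].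
  subst i; rewrite tsum0 ?add0 // => j hj; apply: h.
  by apply: contraNneq his => <-.
rewrite h // IH //; first by rewrite add0l.
by move: hk; rewrite eq_sym (negbTE ne).
Qed.
Lemma br_tsum (I : Type) (F : I -> T) s z :
  teq (Lbr z (tsum (map F s))) (tsum [seq Lbr z (F i) | i <- s]).
Proof. elim: s => [|i s IH] /=; first exact: br0r. by rewrite brDr IH. Qed.

Lemma tr x y : trel x y -> teq x y. Proof. exact: le_rel. Qed.
Lemma tsym i j : teq (tT K g i j) (tT K g j i). Proof. exact/le_rel/tr_sym. Qed.
Lemma centl i d (j : 'I_n) : teq (Lbr (tT K g i i) (zn K d j)) Lzero.
Proof. rewrite /zn; case: ifP => _; exact/le_rel/tr_central. Qed.
Lemma centr i d (j : 'I_n) : teq (Lbr (zn K d j) (tT K g i i)) Lzero.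
Proof. by rewrite anti centl scalez. Qed.
End Basic.

Section Pairing.
Variables (K : fieldType) (g : nat).
Implicit Types c d e : abasis g.
Lemma pair_anti c d : pairing K d c = - pairing K c d.
Proof.
case: c d => [k b] [l b']; rewrite /pairing /= eq_sym.
case: (k == l) => /=; last by rewrite oppr0.
by case: b; case: b' => /=; rewrite ?oppr0 ?opprK.
Qed.
Lemma pair_ne1 c d : c.1 != d.1 -> pairing K c d = 0.
Proof. by rewrite /pairing => /negbTE ->. Qed.
Lemma pair_ndual e c : c != pdual e -> pairing K e c = 0.
Proof.
case: e c => [k b] [l b']; rewrite /pairing /pdual /= => h.
case: eqP => //= ekl; subst l; case: b b' h => [] [] //=; by rewrite eqxx.
Qed.
End Pairing.

Section F1.
Variables (K : fieldType) (g n : nat).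
Lemma F1 (c d : abasis g) (i j : 'I_n) : i != j ->
  teq (Lbr (zn K c i) (zn K d j)) (Lscale (- pairing K c d) (tT K g i j)).
Proof.
move=> hij; case: c d => [k b] [l b']; rewrite /zn /pairing /=.
case: (eqVneq k l) => [e|ne].
- subst l; case: b; case: b' => /=.
  + rewrite oppr0 scale0; exact/le_rel/tr_yy.
  + have hji : j != i by rewrite eq_sym.
    rewrite anti (tr (tr_xyT K k hji)) tsym; lin.
  + rewrite opprK scale1; exact/le_rel/tr_xyT.
  + rewrite oppr0 scale0; exact/le_rel/tr_xx.
- rewrite oppr0 scale0; case: b; case: b' => /=.
  + exact/le_rel/tr_yy.
  + have hji : j != i by rewrite eq_sym.
    have hlk : l != k by rewrite eq_sym.
    by rewrite anti (tr (tr_xy K hji hlk)) scalez.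
  + exact/le_rel/tr_xy.
  + exact/le_rel/tr_xx.
Qed.
End F1.

Lemma enum3 : enum 'I_3 = [:: i3_0; i3_1; i3_2].
Proof. by apply: (inj_map val_inj); rewrite val_enum_ord /= inordK. Qed.
Lemma enum2 : enum 'I_2 = [:: i2_0; i2_1].
Proof. by apply: (inj_map val_inj); rewrite val_enum_ord. Qed.
Lemma enum1 : enum 'I_1 = [:: ord0].
Proof. by apply: (inj_map val_inj); rewrite val_enum_ord. Qed.
Lemma v31 : nat_of_ord i3_1 = 1%N. Proof. by rewrite /i3_1 inordK. Qed.
Lemma e3 (i j : 'I_3) : (i == j) = (nat_of_ord i == nat_of_ord j). Proof. by []. Qed.
Lemma e2 (i j : 'I_2) : (i == j) = (nat_of_ord i == nat_of_ord j). Proof. by []. Qed.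
Lemma n01 : i3_0 != i3_1. Proof. by rewrite e3 v31. Qed.
Lemma n12 : i3_1 != i3_2. Proof. by rewrite e3 v31. Qed.
Lemma n02 : i3_0 != i3_2. Proof. by []. Qed.
Lemma m01 : i2_0 != i2_1. Proof. by []. Qed.

Ltac csimpl := rewrite /coface /= ?enum3 ?enum2 ?enum1 /=;
  unfold phi_1_23, phi_2_13, phi_12_3, phi_1_2, phi_2_1, phi_12;
  do 3 rewrite ?e3 ?e2 ?v31 /=.

Section Cof.
Variables (K : fieldType) (g : nat).
Implicit Types f : abasis g.
Notation "'T3'" := (fun i j => tT K g (n:=3) i j).
Lemma cz_1_23 f : teq (coface phi_1_23 (zc K f)) (zn K f i3_0).
Proof. case: f => k []; rewrite /zc /zn /=; csimpl; lin. Qed.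
Lemma cz_2_13 f : teq (coface phi_2_13 (zc K f)) (zn K f i3_1).
Proof. case: f => k []; rewrite /zc /zn /=; csimpl; lin. Qed.
Lemma cz_12_3 f : teq (coface phi_12_3 (zc K f)) (Ladd (zn K f i3_0) (zn K f i3_1)).
Proof. case: f => k []; rewrite /zc /zn /=; csimpl; lin. Qed.
Lemma cz_1_2 f : teq (coface phi_1_2 (zc K f)) (zn K f i2_0).
Proof. case: f => k []; rewrite /zc /zn /=; csimpl; lin. Qed.
Lemma cz_2_1 f : teq (coface phi_2_1 (zc K f)) (zn K f i2_1).
Proof. case: f => k []; rewrite /zc /zn /=; csimpl; lin. Qed.
Lemma cz_12 f : teq (coface phi_12 (zn K f (ord0 : 'I_1))) (Ladd (zn K f i2_0) (zn K f i2_1)).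
Proof. case: f => k []; rewrite /zc /zn /=; csimpl; lin. Qed.
Lemma ct_1_23 : teq (coface phi_1_23 (t11 K g)) (tT K g i3_0 i3_0).
Proof. rewrite /t11; csimpl; lin. Qed.
Lemma ct_2_13 : teq (coface phi_2_13 (t11 K g)) (tT K g i3_1 i3_1).
Proof. rewrite /t11; csimpl; lin. Qed.
Lemma ct_12_3 : teq (coface phi_12_3 (t11 K g)) (Ladd (Ladd (tT K g i3_0 i3_0) (tT K g i3_1 i3_1))
   (Lscale 2^-1 (Ladd (tT K g i3_0 i3_1) (tT K g i3_1 i3_0)))).
Proof. rewrite /t11; csimpl; lin. Qed.
Lemma ct_1_2 : teq (coface phi_1_2 (t11 K g)) (tT K g i2_0 i2_0).
Proof. rewrite /t11; csimpl; lin. Qed.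
Lemma ct_2_1 : teq (coface phi_2_1 (t11 K g)) (tT K g i2_1 i2_1).
Proof. rewrite /t11; csimpl; lin. Qed.
Lemma ct_12 : teq (coface phi_12 (tT K g (ord0 : 'I_1) ord0)) (Ladd (Ladd (tT K g i2_0 i2_0) (tT K g i2_1 i2_1))
   (Lscale 2^-1 (Ladd (tT K g i2_0 i2_1) (tT K g i2_1 i2_0)))).
Proof. csimpl; lin. Qed.
End Cof.

Section Core.
Variables (K : fieldType) (g : nat).
Implicit Types f h d e : abasis g.

Lemma Z3 e : (2 <= g)%N -> teq (Lbr (zn K e i3_0) (tT K g i3_1 i3_2)) Lzero.
Proof.
move=> hg.
have [l hl] : exists l : 'I_g, e.1 != l.
  case: e => k b /=. have h1 : (1 < g)%N := hg. have h0 : (0 < g)%N := ltnW h1.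
  case: (eqVneq (nat_of_ord k) 0%N) => hk; [exists (Ordinal h1) | exists (Ordinal h0)];
    by rewrite -val_eqE /= ?hk.
rewrite -(tr (tr_xyT K l n12)).
rewrite -[tX K l i3_1]/(zn K (a_ l) i3_1) -[tY K l i3_2]/(zn K (b_ l) i3_2).
rewrite der (F1 K e (a_ l) n01) (F1 K e (b_ l) n02).
rewrite (pair_ne1 K (d:=a_ l) hl) (pair_ne1 K (d:=b_ l) hl) oppr0 !scale0 br0l br0r add0.
by [].
Qed.

Lemma F2 e : (2 <= g)%N ->
  teq (Lbr (zn K e i3_1) (tT K g i3_0 i3_1)) (Lscale (-1) (Lbr (zn K e i3_0) (tT K g i3_0 i3_1))).
Proof.
move=> hg.
have D := tr (tr_diag K g i3_1).
have G : forall k, teq (Lbr (zn K e i3_0) (Lbr (tX K k i3_1) (tY K k i3_1)))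
  (Ladd (Lscale (-pairing K e (a_ k)) (Lbr (tT K g i3_0 i3_1) (tY K k i3_1)))
        (Lscale (-pairing K e (b_ k)) (Lbr (tX K k i3_1) (tT K g i3_0 i3_1)))).
  move=> k; rewrite -[tX K k i3_1]/(zn K (a_ k) i3_1) -[tY K k i3_1]/(zn K (b_ k) i3_1).
  rewrite der (F1 K e (a_ k) n01) (F1 K e (b_ k) n01) brZl brZr; lin.
transitivity (Lbr (zn K e i3_0) (tsum [seq Lbr (tX K k i3_1) (tY K k i3_1) | k <- enum 'I_g])).
  symmetry; rewrite br_tsum; apply: teq_trans (tsum_ext _ G) _.
  rewrite (tsum_single (k := e.1)) ?enum_uniq ?mem_enum //.
    case: e {G D} => k [] /=; rewrite /pairing /zn /= eqxx /= ?oppr0 ?opprK ?scale0 ?scale1.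
      rewrite (anti (tT K g i3_0 i3_1)); lin.
    lin.
  move=> i hi; rewrite !(pair_ne1 K) /= 1?eq_sym // oppr0 !scale0; lin.
rewrite D; rewrite ?enum3 /=; do 3 rewrite ?e3 ?v31 /=.
rewrite brDr !brZr !brDr br0r (Z3 e hg) (tsym K g i3_1 i3_0) centr; lin.
Qed.
End Core.

Definition W (K : fieldType) g (f h : abasis g) : lterm K (tgen g 2) :=
  Ladd (Lbr (zc K f) (zc K h)) (Lscale (2 * pairing K f h) (t11 K g)).
Definition u1 (K : fieldType) g (f h : abasis g) : lterm K (tgen g 1) :=
  Ladd (Lbr (zn K f ord0) (zn K h ord0)) (Lscale (2 * pairing K f h) (tT K g ord0 ord0)).

Section CofLin.
Variables (K : fieldType) (g m n : nat) (phi : 'I_m -> 'I_n).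
Implicit Types x y : lterm K (tgen g n).
Lemma cofD x y : coface phi (Ladd x y) = Ladd (coface phi x) (coface phi y). Proof. by []. Qed.
Lemma cofZ a x : coface phi (Lscale a x) = Lscale a (coface phi x). Proof. by []. Qed.
Lemma cofB x y : coface phi (Lbr x y) = Lbr (coface phi x) (coface phi y). Proof. by []. Qed.
Lemma cof0 : coface phi (Lzero : lterm K (tgen g n)) = Lzero. Proof. by []. Qed.
End CofLin.

Section PerW.
Variables (K : fieldType) (g : nat).
Implicit Types f h d e c : abasis g.

Lemma A n f h (i j : 'I_n) : i != j -> (2%:R : K) != 0 ->
  teq (Ladd (Lbr (Ladd (zn K f i) (zn K f j)) (Ladd (zn K h i) (zn K h j)))
         (Lscale (2 * pairing K f h) (Ladd (Ladd (tT K g i i) (tT K g j j))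
             (Lscale 2^-1 (Ladd (tT K g i j) (tT K g j i))))))
      (Ladd (Ladd (Lbr (zn K f i) (zn K h i)) (Lscale (2 * pairing K f h) (tT K g i i)))
            (Ladd (Lbr (zn K f j) (zn K h j)) (Lscale (2 * pairing K f h) (tT K g j j)))).
Proof.
move=> hij h2; have hji : j != i by rewrite eq_sym.
rewrite brDl !brDr (F1 K f h hij) (F1 K f h hji).
lin; field; exact h2.
Qed.

Lemma C1 f h : (2%:R : K) != 0 ->
  teq (coface phi_12 (u1 K f h)) (Ladd (coface phi_1_2 (W K f h)) (coface phi_2_1 (W K f h))).
Proof.
move=> h2; rewrite /u1 /W !cofD !cofB !cofZ !cz_12 ct_12 !cz_1_2 ct_1_2 !cz_2_1 ct_2_1.
exact: A m01 h2.
Qed.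

Lemma C2 f h : (2%:R : K) != 0 ->
  teq (coface phi_12_3 (W K f h)) (Ladd (coface phi_1_23 (W K f h)) (coface phi_2_13 (W K f h))).
Proof.
move=> h2; rewrite /W !cofD !cofB !cofZ !cz_12_3 ct_12_3 !cz_1_23 ct_1_23 !cz_2_13 ct_2_13.
exact: A n01 h2.
Qed.

Lemma LB n f h d (i j : 'I_n) : i != j ->
  teq (Lbr (Lbr (zn K f i) (zn K h i)) (zn K d j))
      (Ladd (Lscale (- pairing K h d) (Lbr (zn K f i) (tT K g i j)))
            (Lscale (pairing K f d) (Lbr (zn K h i) (tT K g i j)))).
Proof.
move=> hij; have hji : j != i by rewrite eq_sym.
rewrite (anti (Lbr (zn K f i) (zn K h i))) der (F1 K d f hji) (F1 K d h hji) brZl brZr.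
rewrite (anti (tT K g j i) (zn K h i)) (tsym K g j i) (pair_anti K f d) (pair_anti K h d); lin.
Qed.

Lemma n10 : i3_1 != i3_0. Proof. by rewrite eq_sym n01. Qed.

Lemma L1 f h d : teq (Lbr (coface phi_1_23 (W K f h)) (zn K d i3_1))
  (Ladd (Lscale (- pairing K h d) (Lbr (zn K f i3_0) (tT K g i3_0 i3_1)))
        (Lscale (pairing K f d) (Lbr (zn K h i3_0) (tT K g i3_0 i3_1)))).
Proof.
rewrite /W cofD cofB cofZ !cz_1_23 ct_1_23 brDl brZl centl scalez add0.
exact: LB n01.
Qed.

Lemma L2 f h c : (2 <= g)%N -> teq (Lbr (coface phi_2_13 (W K f h)) (zn K c i3_0))
  (Ladd (Lscale (pairing K h c) (Lbr (zn K f i3_0) (tT K g i3_0 i3_1)))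
        (Lscale (- pairing K f c) (Lbr (zn K h i3_0) (tT K g i3_0 i3_1)))).
Proof.
move=> hg; rewrite /W cofD cofB cofZ !cz_2_13 ct_2_13 brDl brZl centl scalez add0.
rewrite (LB f h c n10) (tsym K g i3_1 i3_0) (F2 K f hg) (F2 K h hg); lin.
Qed.

Lemma L5 f h d : teq (Lbr (coface phi_1_23 (W K f h)) (zn K d i3_0))
  (Lbr (Lbr (zn K f i3_0) (zn K h i3_0)) (zn K d i3_0)).
Proof.
by rewrite /W cofD cofB cofZ !cz_1_23 ct_1_23 brDl brZl centl scalez add0.
Qed.

Lemma Wanti m (phi : 'I_m -> 'I_2) f h :
  teq (coface phi (W K f h)) (Lscale (-1) (coface phi (W K h f))).
Proof.
rewrite /W !cofD !cofB !cofZ (anti (coface phi (zc K f))) (pair_anti K f h); lin.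
Qed.

Definition P e (X : lterm K (tgen g 3)) (i : 'I_g) :=
  Ladd (Lscale (- pairing K e (a_ i)) (Lbr X (tY K i i3_0)))
       (Lscale (pairing K e (b_ i)) (Lbr X (tX K i i3_0))).

Lemma sumP e X : teq (tsum [seq P e X i | i <- enum 'I_g]) (Lscale (-1) (Lbr X (zn K e i3_0))).
Proof.
rewrite (tsum_single (k := e.1)) ?enum_uniq ?mem_enum //.
  rewrite /P; case: e => k [] /=; rewrite /pairing /zn /= eqxx /=; lin.
move=> i hi; rewrite /P !(pair_ne1 K) /= 1?eq_sym // oppr0 !scale0; lin.
Qed.
End PerW.

Section Final.
Variables (K : fieldType) (g : nat) (al be ga : abasis g).
Hypotheses (hab : al != be) (hag : al != ga) (hbg : be != ga).

Lemma pdualK (x : abasis g) : pdual (pdual x) = x.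
Proof. by case: x => k b; rewrite /pdual /= negbK. Qed.
Lemma pdual_inj : injective (@pdual g). Proof. exact: can_inj pdualK. Qed.

Lemma Vabc_split c : Vabc K al be ga c =
  if c == pdual al then Lscale (- pairing K al (pdual al)) (W K be ga)
  else if c == pdual be then Lscale (pairing K be (pdual be)) (W K al ga)
  else if c == pdual ga then Lscale (- pairing K ga (pdual ga)) (W K al be)
  else Lzero.
Proof. by []. Qed.

Lemma VabcE m (phi : 'I_m -> 'I_2) c : teq (coface phi (Vabc K al be ga c))
  (Ladd (Ladd (Lscale (- pairing K al c) (coface phi (W K be ga)))
              (Lscale (- pairing K be c) (coface phi (W K ga al))))
        (Lscale (- pairing K ga c) (coface phi (W K al be)))).
Proof.
have nd : forall x y : abasis g, x != y -> pdual x != pdual y.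
  by move=> x y; rewrite (inj_eq pdual_inj).
have hba : be != al by rewrite eq_sym.
have hga : ga != al by rewrite eq_sym.
have hgb : ga != be by rewrite eq_sym.
rewrite Vabc_split.
case: (eqVneq c (pdual al)) => [->|n1].
  rewrite cofZ (pair_ndual K (nd _ _ hab)) (pair_ndual K (nd _ _ hag)); lin.
case: (eqVneq c (pdual be)) => [->|n2].
  rewrite cofZ (pair_ndual K (nd _ _ hba)) (pair_ndual K (nd _ _ hbg)) (Wanti K phi al ga); lin.
case: (eqVneq c (pdual ga)) => [->|n3].
  rewrite cofZ (pair_ndual K (nd _ _ hga)) (pair_ndual K (nd _ _ hgb)); lin.
rewrite cof0 (pair_ndual K n1) (pair_ndual K n2) (pair_ndual K n3); lin.
Qed.
End Final.

Section Final2.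
Variables (K : fieldType) (g : nat) (al be ga : abasis g).
Hypotheses (hab : al != be) (hag : al != ga) (hbg : be != ga) (hg : (2 <= g)%N).

Lemma Cond34 c d : teq (Lsub (Lbr (coface phi_1_23 (Vabc K al be ga c)) (zn K d i3_1))
                             (Lbr (coface phi_2_13 (Vabc K al be ga d)) (zn K c i3_0))) Lzero.
Proof.
rewrite !(VabcE K hab hag hbg) !brDl !brZl !L1 !(L2 _ _ _ _ hg); lin.
Qed.

Lemma Q5 i : teq (Lsub (Lbr (coface phi_1_23 (Vabc K al be ga (a_ i))) (tY K i i3_0))
                       (Lbr (coface phi_1_23 (Vabc K al be ga (b_ i))) (tX K i i3_0)))
  (Ladd (Ladd (P al (Lbr (zn K be i3_0) (zn K ga i3_0)) i)
              (P be (Lbr (zn K ga i3_0) (zn K al i3_0)) i))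
        (P ga (Lbr (zn K al i3_0) (zn K be i3_0)) i)).
Proof.
rewrite /P -[tY K i i3_0]/(zn K (b_ i) i3_0) -[tX K i i3_0]/(zn K (a_ i) i3_0).
rewrite !(VabcE K hab hag hbg) !brDl !brZl !L5; lin.
Qed.

Lemma Cond5 : teq (tsum [seq Lsub (Lbr (coface phi_1_23 (Vabc K al be ga (a_ i))) (tY K i i3_0))
                       (Lbr (coface phi_1_23 (Vabc K al be ga (b_ i))) (tX K i i3_0)) | i <- enum 'I_g]) Lzero.
Proof.
apply: teq_trans (tsum_ext _ Q5) _.
apply: teq_trans (tsum_add _ _ _) _.
rewrite tsum_add !sumP.
transitivity (Lscale (-1) (Ladd (Ladd
   (Lbr (Lbr (zn K be i3_0) (zn K ga i3_0)) (zn K al i3_0))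
   (Lbr (Lbr (zn K ga i3_0) (zn K al i3_0)) (zn K be i3_0)))
   (Lbr (Lbr (zn K al i3_0) (zn K be i3_0)) (zn K ga i3_0)))); first lin.
by rewrite jac3 scalez.
Qed.
End Final2.

Theorem lemma11p10 (K : fieldType) (hK : [pchar K]%R =i pred0) (g : nat)
  (hg : (2 <= g)%N) (al be ga : abasis g)
  (hab : al != be) (hag : al != ga) (hbg : be != ga) :
  inZ (Vabc K al be ga).
Proof.
have h2 : (2%:R : K) != 0 by rewrite (pcharf0P K).1.
split.
- move=> c.
  exists (Ladd (Ladd (Lscale (- pairing K al c) (u1 K be ga))
                     (Lscale (- pairing K be c) (u1 K ga al)))
               (Lscale (- pairing K ga c) (u1 K al be))).
  rewrite !cofD !cofZ !(C1 _ _ h2) !(VabcE K hab hag hbg); lin.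
- move=> c; rewrite !(VabcE K hab hag hbg) !(C2 _ _ h2); lin.
- move=> i j; exact: (Cond34 K hab hag hbg hg (a_ i) (b_ j)).
- move=> i j _; split; [exact: (Cond34 K hab hag hbg hg (a_ i) (a_ j)) | exact: (Cond34 K hab hag hbg hg (b_ i) (b_ j))].
- exact: (Cond5 K hab hag hbg).
Qed.
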